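(* Let $X$ be a compact metric space, $r\in\omega$, and $\mathcal C_i\subseteq\mathcal P(X)$ for $i<r$. Let $P^\nu_i$ be the optimal derivation sequence for $\mathcal C_i$, and let $Q^\nu$ be the optimal derivation sequence for $\{\bigcap_{i<r}C_i: C_i\in\mathcal C_i \text{ for each } i<r\}$. Then for all ordinals $(\nu_i)_{i<r}$, $Q^{\#_{i<r}\nu_i}\subseteq\bigcup_{i<r}P_i^{\nu_i}$.
   Context: Optimal derivation sequence: for $\mathcal C\subseteq\mathcal P(X)$, define $P^0=X$, $P^{\nu+1}=P^\nu\setminus\bigcup\{U\subseteq X \text{ open}: P^\nu\cap U\subseteq C\text{ for some }C\in\mathcal C\}$, and $P^\lambda=\bigcap_{\nu<\lambda}P^\nu$ for limit $\lambda$. Natural (Hessenberg) sum: if $\alpha$ and $\beta$ have Cantor normal forms with exponents among $\xi_1>\dots>\xi_r$, $\alpha=\sum_i\omega^{\xi_i}m_i$, $\beta=\sum_i\omega^{\xi_i}n_i$ ($m_i,n_i\in\mathbb N$), then $\alpha\#\beta=\sum_i\omega^{\xi_i}(m_i+n_i)$; $\#_{i<r}\nu_i$ is the iterated natural sum (with value $0$ if $r=0$). *)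

(* Defs.v *)
From Stdlib Require Import Reals List Arith.
Open Scope R_scope.

Definition IsMetric {X : Type} (d : X -> X -> R) : Prop :=
  (forall x y, 0 <= d x y) /\
  (forall x y, d x y = 0 <-> x = y) /\
  (forall x y, d x y = d y x) /\
  (forall x y z, d x z <= d x y + d y z).

Definition IsOpen {X : Type} (d : X -> X -> R) (U : X -> Prop) : Prop :=
  forall x, U x -> exists eps, 0 < eps /\ forall y, d x y < eps -> U y.

Definition IsCompact {X : Type} (d : X -> X -> R) : Prop :=
  forall (I : Type) (U : I -> X -> Prop),
    (forall i, IsOpen d (U i)) -> (forall x, exists i, U i x) ->
    exists l : list I, forall x, exists i, In i l /\ U i x.

Record RawOrd := { rcar : Type; rlt : rcar -> rcar -> Prop }.

Definition IsWO (A : RawOrd) : Prop :=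
  well_founded (rlt A) /\
  (forall a b c, rlt A a b -> rlt A b c -> rlt A a c) /\
  (forall a b, rlt A a b \/ a = b \/ rlt A b a).

Definition OrdIso (A B : RawOrd) : Prop :=
  exists f : rcar A -> rcar B,
    (forall a a', f a = f a' -> a = a') /\
    (forall b, exists a, f a = b) /\
    (forall a a', rlt A a a' <-> rlt B (f a) (f a')).

Definition OrdLt (A B : RawOrd) : Prop :=
  exists (b : rcar B) (f : rcar A -> rcar B),
    (forall a a', f a = f a' -> a = a') /\
    (forall a, rlt B (f a) b) /\
    (forall b', rlt B b' b -> exists a, f a = b') /\
    (forall a a', rlt A a a' <-> rlt B (f a) (f a')).

(* omega ^ xi : finitely supported functions xi -> nat, compared at the
   largest point where they differ *)
Definition omega_pow (xi : RawOrd) : RawOrd :=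
  {| rcar := { f : rcar xi -> nat | exists l : list (rcar xi), forall x, f x <> 0%nat -> In x l };
     rlt := fun f g => exists x, (proj1_sig f x < proj1_sig g x)%nat /\
                         forall y, rlt xi x y -> proj1_sig f y = proj1_sig g y |}.

(* A * m (ordinal product with a natural number m): m copies of A *)
Definition ord_mul_nat (A : RawOrd) (m : nat) : RawOrd :=
  {| rcar := ({ k : nat | (k < m)%nat } * rcar A)%type;
     rlt := fun p q => (proj1_sig (fst p) < proj1_sig (fst q))%nat \/
                       (proj1_sig (fst p) = proj1_sig (fst q) /\ rlt A (snd p) (snd q)) |}.

Definition ord_sum (s : nat) (A : nat -> RawOrd) : RawOrd :=
  {| rcar := { z : { j : nat & rcar (A j) } | (projT1 z < s)%nat };
     rlt := fun z1 z2 =>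
       (projT1 (proj1_sig z1) < projT1 (proj1_sig z2))%nat \/
       exists e : projT1 (proj1_sig z1) = projT1 (proj1_sig z2),
         rlt (A (projT1 (proj1_sig z2)))
             (eq_rect _ (fun j => rcar (A j)) (projT2 (proj1_sig z1)) _ e)
             (projT2 (proj1_sig z2)) |}.

Definition cnf (s : nat) (xi : nat -> RawOrd) (m : nat -> nat) : RawOrd :=
  ord_sum s (fun j => ord_mul_nat (omega_pow (xi j)) (m j)).

Definition sum_below (r : nat) (g : nat -> nat) : nat :=
  fold_right Nat.add 0%nat (map g (seq 0 r)).

(* NatSum r nu gamma : gamma has the order type of the iterated natural
   (Hessenberg) sum #_{i<r} nu i, computed from Cantor normal forms with a
   common strictly decreasing list of exponents xi 0 > ... > xi (s-1). *)
Definition NatSum (r : nat) (nu : nat -> RawOrd) (gamma : RawOrd) : Prop :=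
  exists (s : nat) (xi : nat -> RawOrd) (m : nat -> nat -> nat),
    (forall j, (j < s)%nat -> IsWO (xi j)) /\
    (forall j, (S j < s)%nat -> OrdLt (xi (S j)) (xi j)) /\
    (forall i, (i < r)%nat -> OrdIso (nu i) (cnf s xi (m i))) /\
    OrdIso gamma (cnf s xi (fun j => sum_below r (fun i => m i j))).

Definition deriv_step {X : Type} (d : X -> X -> R) (C : (X -> Prop) -> Prop)
    (A : X -> Prop) : X -> Prop :=
  fun x => A x /\
    ~ (exists U, IsOpen d U /\ U x /\
         exists c, C c /\ forall y, A y -> U y -> c y).

Definition IsMaxIn {T : Type} (lt : T -> T -> Prop) (below : T -> Prop) (p : T) : Prop :=
  below p /\ forall v, below v -> v = p \/ lt v p.

(* value of the sequence at the ordinal whose predecessors are [below]: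
   X at 0, the derivative of the previous stage at successors,
   the intersection at limits *)
Definition deriv_clause {X : Type} (d : X -> X -> R) (C : (X -> Prop) -> Prop)
    (W : RawOrd) (S : rcar W -> X -> Prop) (below : rcar W -> Prop) : X -> Prop :=
  fun x =>
    (forall p, IsMaxIn (rlt W) below p -> deriv_step d C (S p) x) /\
    ((~ exists p, IsMaxIn (rlt W) below p) -> forall v, below v -> S v x).

(* S v = P^(ordinal of {u | u < v}) for all v in W *)
Definition IsDerivSeq {X : Type} (d : X -> X -> R) (C : (X -> Prop) -> Prop)
    (W : RawOrd) (S : rcar W -> X -> Prop) : Prop :=
  forall u x, S u x <-> deriv_clause d C W S (fun v => rlt W v u) x.

(* P^nu where nu is the order type of the well-order W *)
Definition Deriv {X : Type} (d : X -> X -> R) (C : (X -> Prop) -> Prop)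
    (W : RawOrd) : X -> Prop :=
  fun x => forall S, IsDerivSeq d C W S -> deriv_clause d C W S (fun _ => True) x.

Definition meet_family {X : Type} (r : nat) (C : nat -> (X -> Prop) -> Prop)
    : (X -> Prop) -> Prop :=
  fun D => exists c : nat -> X -> Prop,
    (forall i, (i < r)%nat -> C i (c i)) /\
    (forall x, D x <-> forall i, (i < r)%nat -> c i x).

(* Main.v *)
Require Import Defs.
From Stdlib Require Import Reals List Arith Lia Lra.
From Stdlib Require Import ClassicalEpsilon ProofIrrelevance Eqdep_dec Classical FunctionalExtensionality.
Local Open Scope nat_scope.

Lemma wf_irrefl (A : RawOrd) : well_founded (rlt A) -> forall a, ~ rlt A a a.
Proof. intros W a. induction (W a) as [a _ IH]. intros H. exact (IH a H H). Qed.

Definition optlt (A : RawOrd) (u v : option (rcar A)) : Prop :=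
  match u, v with Some a, Some b => rlt A a b | Some _, None => True | None, _ => False end.
Definition optO (A : RawOrd) : RawOrd := {| rcar := option (rcar A); rlt := optlt A |}.

Lemma optO_WO A : IsWO A -> IsWO (optO A).
Proof.
  intros [W [T To]]. split; [|split].
  - assert (HS : forall a, Acc (optlt A) (Some a)).
    { intros a. induction (W a) as [a _ IH]. constructor. intros [b|] H; simpl in H;
      [apply IH; exact H| contradiction]. }
    intros [a|]; [apply HS|]. constructor. intros [b|] H; [apply HS | contradiction].
  - intros [a|] [b|] [c|]; simpl; try tauto. apply T.
  - intros [a|] [b|]; simpl; auto. destruct (To a b) as [H|[H|H]]; auto. subst; auto.
Qed.

Lemma embed_WO (A B : RawOrd) (f : rcar A -> rcar B) :
  (forall a a', f a = f a' -> a = a') -> (forall a a', rlt A a a' <-> rlt B (f a) (f a')) ->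
  IsWO B -> IsWO A.
Proof.
  intros Hi Hf [W [T To]]. split; [|split].
  - intros a. remember (f a) as b eqn:E. revert a E. induction (W b) as [b _ IH].
    intros a E. constructor. intros a' H. apply (IH (f a')); auto. subst. apply Hf; auto.
  - intros a b c H1 H2. apply Hf. apply Hf in H1. apply Hf in H2. eauto.
  - intros a b. destruct (To (f a) (f b)) as [H|[H|H]];
      [left; apply Hf; auto | right; left; auto | right; right; apply Hf; auto].
Qed.

Lemma iso_WO_back A B : OrdIso A B -> IsWO B -> IsWO A.
Proof. intros [f [Hi [Hs Hf]]]. apply (embed_WO A B f); auto. Qed.

Lemma iso_WO_fwd A B : OrdIso A B -> IsWO A -> IsWO B.
Proof.
  intros [f [Hi [Hs Hf]]] [W [T To]]. split; [|split].
  - assert (H: forall a, Acc (rlt B) (f a)).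
    { intros a. induction (W a) as [a _ IH]. constructor. intros b H.
      destruct (Hs b) as [a' <-]. apply IH. apply Hf; auto. }
    intros b. destruct (Hs b) as [a <-]; auto.
  - intros b1 b2 b3. destruct (Hs b1) as [a1 <-], (Hs b2) as [a2 <-], (Hs b3) as [a3 <-].
    intros H H0. apply Hf. apply Hf in H. apply Hf in H0. eauto.
  - intros b1 b2. destruct (Hs b1) as [a1 <-], (Hs b2) as [a2 <-].
    destruct (To a1 a2) as [H|[H|H]];
      [left; apply Hf; auto| right; left; subst; auto| right; right; apply Hf; auto].
Qed.

Lemma mul_WO A m : IsWO A -> IsWO (ord_mul_nat A m).
Proof.
  intros [W [T To]]. split; [|split].
  - intros [[k Hk] a]. revert Hk a.
    induction k as [k IHk] using (well_founded_induction lt_wf).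
    intros Hk a. induction (W a) as [a _ IHa]. constructor.
    intros [[k' Hk'] a'] H. simpl in H. destruct H as [H|[H1 H2]].
    + apply IHk; auto.
    + subst k'. rewrite (proof_irrelevance _ Hk' Hk). apply IHa. exact H2.
  - intros [[k1 ?] a1] [[k2 ?] a2] [[k3 ?] a3]; simpl.
    intros [H|[H H']] [G|[G G']]; [left; lia | left; lia | left; lia | right; split; [lia | eauto]].
  - intros [[k1 H1] a1] [[k2 H2] a2]; simpl.
    destruct (lt_eq_lt_dec k1 k2) as [[H|H]|H]; [left; left; auto | | right; right; left; auto].
    subst k2. destruct (To a1 a2) as [G|[G|G]]; [left; right; auto
      | right; left; subst; f_equal; f_equal; apply proof_irrelevance | right; right; right; auto].
Qed.

Lemma mul0_WO A : IsWO (ord_mul_nat A 0).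
Proof.
  split; [|split].
  - intros [[k Hk] a]. lia.
  - intros [[k Hk] a]. lia.
  - intros [[k Hk] a]. lia.
Qed.

Lemma sum_WO s A : (forall j, j < s -> IsWO (A j)) -> IsWO (ord_sum s A).
Proof.
  intros HA. split; [|split].
  - intros [[j a] Hj]. revert a Hj.
    induction j as [j IHj] using (well_founded_induction lt_wf).
    intros a Hj. destruct (HA j Hj) as [W _]. induction (W a) as [a _ IHa]. constructor.
    intros [[j' a'] Hj'] H. simpl in H. destruct H as [H|[e H]].
    + apply IHj; auto.
    + simpl in *. destruct e. simpl in H. rewrite (proof_irrelevance _ Hj' Hj). apply IHa. exact H.
  - intros [[j1 a1] H1] [[j2 a2] H2] [[j3 a3] H3]; simpl.
    intros [G|[e G]] [K|[f K]]; simpl in *.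
    + left; lia.
    + left. destruct f. exact G.
    + left. destruct e. exact K.
    + destruct e, f. simpl in *. right. exists eq_refl. simpl.
      destruct (HA j1 H1) as [_ [T _]]. eauto.
  - intros [[j1 a1] H1] [[j2 a2] H2]; simpl.
    destruct (lt_eq_lt_dec j1 j2) as [[H|H]|H]; [left; left; auto | | right; right; left; auto].
    subst j2. destruct (HA j1 H1) as [_ [_ To]]. destruct (To a1 a2) as [G|[G|G]].
    + left. right. exists eq_refl. exact G.
    + right; left. subst. f_equal. apply proof_irrelevance.
    + right; right; right. exists eq_refl. exact G.
Qed.

Lemma fold_add_c l c : fold_right Nat.add c l = fold_right Nat.add 0 l + c.
Proof. induction l; simpl; lia. Qed.

Lemma sum_below_0 g : sum_below 0 g = 0.
Proof. reflexivity. Qed.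

Lemma sum_below_S n g : sum_below (S n) g = sum_below n g + g n.
Proof.
  unfold sum_below. rewrite seq_S, map_app, fold_right_app. simpl.
  rewrite fold_add_c. lia.
Qed.

Lemma sum_below_ext n g h : (forall i, i < n -> g i = h i) -> sum_below n g = sum_below n h.
Proof.
  induction n; intros H; [reflexivity|]. rewrite !sum_below_S, IHn, H; auto.
Qed.

Lemma sum_below_pos n g : 0 < sum_below n g -> exists i, i < n /\ 0 < g i.
Proof.
  induction n; simpl; [rewrite sum_below_0; lia|]. rewrite sum_below_S. intros H.
  destruct (g n) eqn:E.
  - destruct IHn as [i [Hi Hg]]; [lia|]. exists i; split; auto.
  - exists n; split; [lia|]. rewrite E; lia.
Qed.

Lemma sum_below_split n j g : j <= n -> (forall l, j <= l -> l < n -> g l = 0) ->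
  sum_below n g = sum_below j g.
Proof.
  induction n; intros Hj H. - assert (j = 0) by lia. subst j. reflexivity.
  - destruct (Nat.eq_dec j (S n)). + subst; reflexivity.
    + rewrite sum_below_S, IHn; try lia; auto. rewrite H; lia.
Qed.

Lemma sum_below_single n l0 g : l0 < n -> (forall l, l < n -> l <> l0 -> g l = 0) ->
  sum_below n g = g l0.
Proof.
  induction n; intros Hl H; [lia|]. rewrite sum_below_S.
  destruct (Nat.eq_dec l0 n).
  - subst. rewrite (sum_below_split n 0); [| lia |]. + rewrite sum_below_0. lia.
    + intros l _ Hl'. apply H; lia.
  - rewrite IHn; [|lia|]. + rewrite (H n); lia. + intros; apply H; lia.
Qed.

Lemma sum_below_zero n g : (forall l, l < n -> g l = 0) -> sum_below n g = 0.
Proof. intros H. rewrite (sum_below_split n 0); auto; lia. Qed.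

Lemma sum_below_add n g h : sum_below n (fun i => g i + h i) = sum_below n g + sum_below n h.
Proof. induction n; [reflexivity|]. rewrite !sum_below_S, IHn. lia. Qed.

Lemma sum_below_exch n r h :
  sum_below n (fun l => sum_below r (fun i => h i l)) = sum_below r (fun i => sum_below n (h i)).
Proof.
  induction n. - rewrite sum_below_0. symmetry. apply sum_below_zero. intros; reflexivity.
  - rewrite sum_below_S, IHn. rewrite <- sum_below_add. apply sum_below_ext. intros.
    rewrite sum_below_S. reflexivity.
Qed.

Lemma sum_below_mulr n g c : sum_below n g * c = sum_below n (fun i => g i * c).
Proof. induction n; [reflexivity|]. rewrite !sum_below_S, <- IHn. lia. Qed.

Lemma step_ext1 {X} (d : X -> X -> R) C (A A' : X -> Prop) : (forall x, A x <-> A' x) ->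
  forall x, deriv_step d C A x -> deriv_step d C A' x.
Proof.
  intros H x [H1 H2]. split; [apply H; auto|].
  intros [U [HU [HUx [c [Hc Hi]]]]]. apply H2. exists U; split; auto; split; auto.
  exists c; split; auto. intros y Hy Hu. apply Hi; auto. apply H; auto.
Qed.

Lemma clause_ext1 {X} d C W (S S' : rcar W -> X -> Prop) (B : rcar W -> Prop) :
  (forall v, B v -> forall x, S v x <-> S' v x) ->
  forall x, deriv_clause d C W S B x -> deriv_clause d C W S' B x.
Proof.
  intros H x [H1 H2]. split.
  - intros p Hp. apply (step_ext1 d C (S p) (S' p)); [apply H; exact (proj1 Hp) | apply H1, Hp].
  - intros Hn v Hv. apply H; auto.
Qed.

Lemma clause_ext {X} d C W (S S' : rcar W -> X -> Prop) (B : rcar W -> Prop) :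
  (forall v, B v -> forall x, S v x <-> S' v x) ->
  forall x, deriv_clause d C W S B x <-> deriv_clause d C W S' B x.
Proof.
  intros H x. split; apply clause_ext1; auto. intros v Hv y. symmetry; apply H; auto.
Qed.

Lemma ds_uniq {X} d C W (S S' : rcar W -> X -> Prop) : well_founded (rlt W) ->
  IsDerivSeq d C W S -> IsDerivSeq d C W S' -> forall u x, S u x <-> S' u x.
Proof.
  intros Wf H H' u. induction u as [u IH] using (well_founded_induction Wf). intros x.
  rewrite (H u x), (H' u x). apply clause_ext. intros v Hv. apply IH; auto.
Qed.

Definition dsF {X} d C (W : RawOrd) (u : rcar W) (rec : forall v, rlt W v u -> X -> Prop) : X -> Prop :=
  fun x => (forall p (Hp : IsMaxIn (rlt W) (fun v => rlt W v u) p), deriv_step d C (rec p (proj1 Hp)) x) /\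
           ((~ exists p, IsMaxIn (rlt W) (fun v => rlt W v u) p) -> forall v (Hv : rlt W v u), rec v Hv x).

Lemma ds_exists {X} (d : X -> X -> R) C W : well_founded (rlt W) ->
  exists S : rcar W -> X -> Prop, IsDerivSeq d C W S.
Proof.
  intros Wf. set (S := Fix Wf (fun _ => X -> Prop) (dsF d C W)). exists S.
  assert (E : forall u, S u = dsF d C W u (fun v _ => S v)).
  { intros u. unfold S. refine (Fix_eq Wf (fun _ => X -> Prop) (dsF d C W) _ u).
    intros u' f g Hfg.
    assert (f = g) by (apply functional_extensionality_dep; intros;
                       apply functional_extensionality_dep; intros; apply Hfg).
    subst; reflexivity. }
  intros u x. rewrite E. unfold dsF, deriv_clause. apply iff_refl.
Qed.

Lemma clause_opt {X} d C W (S' : option (rcar W) -> X -> Prop) (Bo : option (rcar W) -> Prop)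
  (B : rcar W -> Prop) :
  (forall w, Bo w <-> match w with Some a => B a | None => False end) ->
  forall x, deriv_clause d C (optO W) S' Bo x <-> deriv_clause d C W (fun a => S' (Some a)) B x.
Proof.
  intros HB.
  assert (M1 : forall a, IsMaxIn (optlt W) Bo (Some a) <-> IsMaxIn (rlt W) B a).
  { intros a. unfold IsMaxIn. rewrite (HB (Some a)). split; intros [H1 H2]; split; auto.
    - intros b Hb. destruct (H2 (Some b)) as [E|E];
        [apply HB; exact Hb| left; congruence | right; exact E].
    - intros [b|] Hb; apply HB in Hb; [|contradiction].
      destruct (H2 b Hb) as [E|E]; [left; congruence| right; exact E]. }
  assert (M0 : ~ IsMaxIn (optlt W) Bo None). { intros [H _]. apply HB in H. exact H. }
  intros x. unfold deriv_clause. split; intros [H1 H2]; split.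
  - intros a Ha. apply (H1 (Some a)). apply M1; auto.
  - intros Hn a Ha. apply H2.
    + intros [[p|] Hp]; [apply Hn; exists p; apply M1; auto | apply M0; auto].
    + apply HB; exact Ha.
  - intros [p|] Hp; [apply H1; apply M1; auto | exfalso; apply M0; auto].
  - intros Hn [v|] Hv; apply HB in Hv; [|contradiction]. apply H2; auto.
    intros [p Hp]. apply Hn. exists (Some p). apply M1; auto.
Qed.

Lemma ds_restrict {X} d C W (S' : option (rcar W) -> X -> Prop) :
  IsDerivSeq d C (optO W) S' ->
  IsDerivSeq d C W (fun a => S' (Some a)) /\
  forall x, S' None x <-> deriv_clause d C W (fun a => S' (Some a)) (fun _ => True) x.
Proof.
  intros H. split.
  - intros u x. rewrite (H (Some u) x). apply clause_opt. intros [w|]; simpl; tauto.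
  - intros x. rewrite (H None x). apply clause_opt. intros [w|]; simpl; tauto.
Qed.

Lemma deriv_opt {X} d C W (S' : option (rcar W) -> X -> Prop) : well_founded (rlt W) ->
  IsDerivSeq d C (optO W) S' -> forall x, Deriv d C W x <-> S' None x.
Proof.
  intros Wf H x. destruct (ds_restrict d C W S' H) as [H1 H2]. rewrite H2. unfold Deriv. split.
  - intros HD. apply HD, H1.
  - intros Hc S HS. apply (proj1 (clause_ext d C W (fun a => S' (Some a)) S _ (fun v _ y => ds_uniq d C W _ _ Wf H1 HS v y) x)). exact Hc.
Qed.

Lemma least_elt (A : RawOrd) (P : rcar A -> Prop) : well_founded (rlt A) ->
  forall u, P u -> exists m, P m /\ forall w, rlt A w m -> ~ P w.
Proof.
  intros Wf u. induction u as [u IH] using (well_founded_induction Wf). intros Pu.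
  destruct (classic (exists w, rlt A w u /\ P w)) as [[w [Hw Pw]]|Hn].
  - apply (IH w); auto.
  - exists u; split; auto. intros w Hw Pw; apply Hn; eauto.
Qed.

Lemma excl {X} d C W (S : rcar W -> X -> Prop) : IsWO W -> IsDerivSeq d C W S ->
  forall b U c y, IsOpen d U -> C c -> (forall z, S b z -> U z -> c z) -> U y ->
  forall v, rlt W b v -> ~ S v y.
Proof.
  intros [Wf [T To]] HS b U c y HU Hc Hi Uy v.
  induction v as [v IH] using (well_founded_induction Wf).
  intros Hbv Sv. apply HS in Sv. destruct Sv as [H1 H2].
  destruct (classic (exists p, IsMaxIn (rlt W) (fun w => rlt W w v) p)) as [[p Hp]|Hn].
  - destruct (H1 p Hp) as [Sp Hnot]. destruct (proj2 Hp b Hbv) as [E|E].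
    + subst p. apply Hnot. exists U. split; auto. split; auto. exists c. split; auto.
    + apply (IH p (proj1 Hp) E). exact Sp.
  - assert (exists w, rlt W w v /\ rlt W b w) as [w [Hw Hbw]].
    { apply NNPP. intros Hno. apply Hn. exists b. split; auto. intros w Hw.
      destruct (To w b) as [E|[E|E]]; auto. exfalso; apply Hno; eauto. }
    apply (IH w Hw Hbw). apply H2; auto.
Qed.

Lemma fin_choice {T} (n : nat) (P : nat -> T -> Prop) (t0 : T) :
  (forall i, i < n -> exists t, P i t) -> exists f : nat -> T, forall i, i < n -> P i (f i).
Proof.
  induction n; intros H.
  - exists (fun _ => t0). intros; lia.
  - destruct IHn as [f Hf]; [intros; apply H; lia|]. destruct (H n) as [t Ht]; [lia|].
    exists (fun i => if Nat.eq_dec i n then t else f i). intros i Hi.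
    destruct (Nat.eq_dec i n); [subst; auto| apply Hf; lia].
Qed.

Lemma open_inter {X} (d : X -> X -> R) (n : nat) (U : nat -> X -> Prop) :
  (forall i, i < n -> IsOpen d (U i)) -> IsOpen d (fun z => forall i, i < n -> U i z).
Proof.
  induction n; intros H x Hx.
  - exists 1%R. split; [lra|]. intros y _ i Hi; lia.
  - destruct (IHn (fun i Hi => H i ltac:(lia)) x (fun i Hi => Hx i ltac:(lia))) as [e1 [He1 H1]].
    destruct (H n ltac:(lia) x (Hx n ltac:(lia))) as [e2 [He2 H2]].
    exists (Rmin e1 e2). split; [apply Rmin_pos; auto|]. intros y Hy i Hi.
    destruct (Nat.eq_dec i n).
    + subst. apply H2. eapply Rlt_le_trans; [exact Hy| apply Rmin_r].
    + apply H1; [eapply Rlt_le_trans; [exact Hy| apply Rmin_l] | lia].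
Qed.

Lemma fin_max (W : RawOrd) (f : nat -> rcar W) n : IsWO W -> 0 < n ->
  exists j, j < n /\ forall j', j' < n -> f j' = f j \/ rlt W (f j') (f j).
Proof.
  intros [_ [T To]]. induction n; intros Hn; [lia|]. destruct n.
  - exists 0. split; auto. intros j' Hj'; left; f_equal; lia.
  - destruct IHn as [j [Hj Hm]]; [lia|]. destruct (To (f j) (f (S n))) as [E|[E|E]].
    + exists (S n). split; [lia|]. intros j' Hj'. destruct (Nat.eq_dec j' (S n)); [left; subst; auto|].
      right. destruct (Hm j') as [E'|E']; [lia| rewrite E'; auto| eauto].
    + exists j; split; [lia|]. intros j' Hj'. destruct (Nat.eq_dec j' (S n)); [subst; left; auto |].
      apply Hm; lia.
    + exists j; split; [lia|]. intros j' Hj'. destruct (Nat.eq_dec j' (S n)); [subst; right; auto |].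
      apply Hm; lia.
Qed.

Definition lexlt (A : RawOrd) (g h : rcar A -> nat) : Prop :=
  exists x, g x < h x /\ forall y, rlt A x y -> g y = h y.
Definition feq {T} (g h : T -> nat) := forall x, g x = h x.
Definition lexle A g h := lexlt A g h \/ feq g h.
Definition finsupp {T} (g : T -> nat) := exists l, forall x, g x <> 0 -> In x l.
Definition addf {T} (g h : T -> nat) := fun x : T => g x + h x.
Definition sumF {T} (r : nat) (F : nat -> T -> nat) : T -> nat := fun x => sum_below r (fun i => F i x).


Lemma lexlt_irrefl A g : ~ lexlt A g g.
Proof. intros [x [H _]]. lia. Qed.

Lemma lexlt_ext A g g' h h' : feq g g' -> feq h h' -> lexlt A g h -> lexlt A g' h'.
Proof.
  intros E1 E2 [x [H1 H2]]. exists x. rewrite <- E1, <- E2. split; auto.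
  intros y Hy. rewrite <- E1, <- E2; auto.
Qed.

Lemma lexle_ext A g g' h h' : feq g g' -> feq h h' -> lexle A g h -> lexle A g' h'.
Proof.
  intros E1 E2 [H|H]; [left; eapply lexlt_ext; eauto| right; intros x; rewrite <- E1, <- E2; auto].
Qed.

Lemma lexlt_trans A g h k : IsWO A -> lexlt A g h -> lexlt A h k -> lexlt A g k.
Proof.
  intros [_ [T To]] [x [H1 H2]] [x' [K1 K2]]. destruct (To x x') as [E|[E|E]].
  - exists x'. split; [rewrite H2; auto|]. intros y Hy. rewrite H2, K2; eauto.
  - subst x'. exists x. split; [lia|]. intros y Hy. rewrite H2, K2; auto.
  - exists x. split; [rewrite <- K2; auto|]. intros y Hy. rewrite H2, K2; eauto.
Qed.

Lemma lexle_lt_trans A g h k : IsWO A -> lexle A g h -> lexlt A h k -> lexlt A g k.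
Proof.
  intros W [H|H] K; [eapply lexlt_trans; eauto| eapply lexlt_ext; [| |exact K]; intro; auto].
Qed.

Lemma lexlt_le_trans A g h k : IsWO A -> lexlt A g h -> lexle A h k -> lexlt A g k.
Proof.
  intros W H [K|K]; [eapply lexlt_trans; eauto| eapply lexlt_ext; [| |exact H]; intro; auto].
Qed.

Lemma lexle_trans A g h k : IsWO A -> lexle A g h -> lexle A h k -> lexle A g k.
Proof.
  intros W [H|H] K.
  - left; eapply lexlt_le_trans; eauto.
  - eapply lexle_ext; [| |exact K]; intro; auto.
Qed.

Lemma lexlt_asym A g h : IsWO A -> lexlt A g h -> ~ lexle A h g.
Proof.
  intros W H K. apply (lexlt_irrefl A g). eapply lexlt_le_trans; eauto.
Qed.

Lemma add_lt A a b c e : IsWO A -> lexlt A a b -> lexle A c e -> lexlt A (addf a c) (addf b e).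
Proof.
  intros [_ [T To]] [x [H1 H2]] [[x' [K1 K2]]|K]; unfold addf.
  - destruct (To x x') as [E|[E|E]].
    + exists x'. split; [rewrite H2; auto; lia|]. intros y Hy. rewrite H2, K2; eauto.
    + subst x'. exists x. split; [lia|]. intros y Hy. rewrite H2, K2; auto.
    + exists x. split; [rewrite K2; auto; lia|]. intros y Hy. rewrite H2, K2; eauto.
  - exists x. rewrite K. split; [lia|]. intros y Hy. rewrite H2, K; auto.
Qed.

Lemma add_le A a b c e : IsWO A -> lexle A a b -> lexle A c e -> lexle A (addf a c) (addf b e).
Proof.
  intros W [H|H] K.
  - left. apply add_lt; auto.
  - destruct K as [K|K].
    + left. eapply lexlt_ext; [| |apply (add_lt A c e a a W K (or_intror (fun x => eq_refl)))];
        intro; unfold addf; rewrite ?H; lia.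
    + right. intro x. unfold addf. rewrite H, K. auto.
Qed.

Lemma sumF_S {T} r (F : nat -> T -> nat) : feq (sumF (S r) F) (addf (sumF r F) (F r)).
Proof. intro x. unfold sumF, addf. apply sum_below_S. Qed.

Lemma sumF_le A r F G : IsWO A -> (forall i, i < r -> lexle A (F i) (G i)) ->
  lexle A (sumF r F) (sumF r G).
Proof.
  intros W. induction r; intros H.
  - right. intro x. reflexivity.
  - eapply lexle_ext; [intro; symmetry; apply sumF_S| intro; symmetry; apply sumF_S|].
    apply add_le; auto.
Qed.

Lemma sumF_lt A r F G j : IsWO A -> (forall i, i < r -> lexle A (F i) (G i)) ->
  j < r -> lexlt A (F j) (G j) -> lexlt A (sumF r F) (sumF r G).
Proof.
  intros W. induction r; intros H Hj Hl; [lia|].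
  eapply lexlt_ext; [intro; symmetry; apply sumF_S| intro; symmetry; apply sumF_S|].
  destruct (Nat.eq_dec j r).
  - subst. eapply lexlt_ext; [intro; unfold addf; apply Nat.add_comm | intro; unfold addf; apply Nat.add_comm|].
    apply add_lt; auto. apply sumF_le; auto.
  - apply add_lt; auto. apply IHr; auto; lia.
Qed.

Lemma fin_add {T} (g h : T -> nat) : finsupp g -> finsupp h -> finsupp (addf g h).
Proof.
  intros [l1 H1] [l2 H2]. exists (l1 ++ l2). intros x Hx. apply in_or_app. unfold addf in Hx.
  destruct (g x) eqn:E; [right; apply H2; lia| left; apply H1; lia].
Qed.

Lemma fin_sumF {T} r (F : nat -> T -> nat) : (forall i, i < r -> finsupp (F i)) -> finsupp (sumF r F).
Proof.
  induction r; intros H.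
  - exists nil. intros x Hx. exfalso. apply Hx. reflexivity.
  - destruct (fin_add (sumF r F) (F r)) as [l Hl]; [apply IHr; auto| apply H; lia|].
    exists l. intros x Hx. apply Hl. rewrite <- sumF_S. auto.
Qed.

Definition OLP (A B : RawOrd) (b : rcar B) (f : rcar A -> rcar B) : Prop :=
    (forall a a', f a = f a' -> a = a') /\
    (forall a, rlt B (f a) b) /\
    (forall b', rlt B b' b -> exists a, f a = b') /\
    (forall a a', rlt A a a' <-> rlt B (f a) (f a')).

Definition olt_data (A B : RawOrd) (H : OrdLt A B) : {b : rcar B & {f : rcar A -> rcar B | OLP A B b f}} :=
  let s := constructive_indefinite_description (fun b => exists f, OLP A B b f) H in
  existT _ (proj1_sig s) (constructive_indefinite_description _ (proj2_sig s)).

Definition oltf (A B : RawOrd) (a : rcar A) : option (rcar B) :=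
  match excluded_middle_informative (OrdLt A B) with
  | left H => Some (proj1_sig (projT2 (olt_data A B H)) a) | right _ => None end.
Definition oltb (A B : RawOrd) : option (rcar B) :=
  match excluded_middle_informative (OrdLt A B) with
  | left H => Some (projT1 (olt_data A B H)) | right _ => None end.

Lemma olt_spec A B : OrdLt A B -> exists b (f : rcar A -> rcar B),
    ((forall a a', f a = f a' -> a = a') /\
    (forall a, rlt B (f a) b) /\
    (forall b', rlt B b' b -> exists a, f a = b') /\
    (forall a a', rlt A a a' <-> rlt B (f a) (f a'))) /\
    oltb A B = Some b /\ forall a, oltf A B a = Some (f a).
Proof.
  intros H. unfold oltf, oltb. destruct (excluded_middle_informative (OrdLt A B)) as [H'|n];
    [|contradiction].
  exists (projT1 (olt_data A B H')), (proj1_sig (projT2 (olt_data A B H'))).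
  split; [exact (proj2_sig (projT2 (olt_data A B H')))|]. split; reflexivity.
Qed.

Fixpoint emb (xi : nat -> RawOrd) (j : nat) : rcar (xi j) -> option (rcar (xi 0)) :=
  match j as j0 return rcar (xi j0) -> option (rcar (xi 0)) with
  | 0 => fun a => Some a
  | S j' => fun a => match oltf (xi (S j')) (xi j') a with Some b => emb xi j' b | None => None end
  end.

Definition tt (xi : nat -> RawOrd) (j : nat) : option (rcar (xi 0)) :=
  match j with 0 => None
  | S j' => match oltb (xi (S j')) (xi j') with Some b => emb xi j' b | None => None end end.

Definition Good (xi : nat -> RawOrd) (s : nat) : Prop :=
  0 < s /\ (forall j, j < s -> IsWO (xi j)) /\ (forall j, S j < s -> OrdLt (xi (S j)) (xi j)).

Notation EO xi := (optO (xi 0)).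

Lemma good_E xi s : Good xi s -> IsWO (EO xi).
Proof. intros [Hs [H _]]. apply optO_WO, H, Hs. Qed.

Lemma emb_props xi s (HG : Good xi s) : forall j, j < s ->
  (forall a a', emb xi j a = emb xi j a' -> a = a') /\
  (forall a a', rlt (xi j) a a' <-> optlt (xi 0) (emb xi j a) (emb xi j a')) /\
  (forall a, optlt (xi 0) (emb xi j a) (tt xi j)) /\
  (forall y, optlt (xi 0) y (tt xi j) -> exists a, emb xi j a = y).
Proof.
  pose proof (good_E xi s HG) as [_ [ET _]].
  pose proof HG as [Hs [Hw Hd]].
  induction j; intros Hj.
  - split; [|split; [|split]].
    + intros a a' E; simpl in E; congruence.
    + intros a a'; simpl; tauto.
    + intros a; simpl; auto.
    + intros [y|] Hy; [exists y; reflexivity| contradiction].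
  - destruct IHj as [I1 [I2 [I3 I4]]]; [lia|].
    destruct (olt_spec _ _ (Hd j Hj)) as [b [f [[F1 [F2 [F3 F4]]] [Eb Ef]]]].
    assert (Ee : forall a, emb xi (S j) a = emb xi j (f a)).
    { intros a. simpl. rewrite Ef. reflexivity. }
    assert (Et : tt xi (S j) = emb xi j b). { simpl. rewrite Eb. reflexivity. }
    split; [|split; [|split]].
    + intros a a' E. rewrite !Ee in E. apply F1, I1, E.
    + intros a a'. rewrite !Ee, F4. apply I2.
    + intros a. rewrite Ee, Et. apply I2, F2.
    + intros y Hy. rewrite Et in Hy.
      destruct (I4 y) as [a' Ha']. { eapply ET; [exact Hy| apply I3]. }
      subst y. apply I2 in Hy. destruct (F3 a' Hy) as [a'' Ha''].
      exists a''. rewrite Ee, Ha''. reflexivity.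
Qed.

Lemma tt_dec xi s (HG : Good xi s) : forall l l', l < l' -> l' < s -> optlt (xi 0) (tt xi l') (tt xi l).
Proof.
  pose proof (good_E xi s HG) as [_ [ET _]].
  intros l l' Hl. induction l'; [lia|]. intros Hs.
  assert (H1 : optlt (xi 0) (tt xi (S l')) (tt xi l')).
  { pose proof HG as [_ [_ Hd]]. destruct (olt_spec _ _ (Hd l' Hs)) as [b [f [_ [Eb _]]]].
    simpl. rewrite Eb. apply (emb_props xi s HG l'); lia. }
  destruct (Nat.eq_dec l l'); [subst; auto|]. eapply ET; [exact H1| apply IHl'; lia].
Qed.

Lemma E_irrefl xi s (HG : Good xi s) y : ~ optlt (xi 0) y y.
Proof. apply (wf_irrefl (EO xi)). apply (good_E xi s HG). Qed.

Lemma tt_inj xi s (HG : Good xi s) l l' : l < s -> l' < s -> tt xi l = tt xi l' -> l = l'.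
Proof.
  intros H1 H2 E. destruct (lt_eq_lt_dec l l') as [[H|H]|H]; auto; exfalso.
  - apply (E_irrefl xi s HG (tt xi l)). rewrite E at 1. apply (tt_dec xi s HG); auto.
  - apply (E_irrefl xi s HG (tt xi l)). rewrite E at 2. apply (tt_dec xi s HG); auto.
Qed.

Definition indc (P : Prop) : nat := if excluded_middle_informative P then 1 else 0.

Definition Mv xi s (m : nat -> nat) (y : option (rcar (xi 0))) : nat :=
  sum_below s (fun l => m l * indc (y = tt xi l)).

Definition Tr xi j (f : rcar (xi j) -> nat) (y : option (rcar (xi 0))) : nat :=
  match excluded_middle_informative (exists a, emb xi j a = y) with
  | left H => f (proj1_sig (constructive_indefinite_description _ H)) | right _ => 0 end.

Definition psi0 xi (m : nat -> nat) j k (f : rcar (xi j) -> nat) (y : option (rcar (xi 0))) : nat :=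
  sum_below j (fun l => m l * indc (y = tt xi l)) + k * indc (y = tt xi j) + Tr xi j f y.

Lemma ind_T (P : Prop) : P -> indc P = 1.
Proof. intros H. unfold indc. destruct (excluded_middle_informative P); tauto. Qed.
Lemma ind_F (P : Prop) : ~ P -> indc P = 0.
Proof. intros H. unfold indc. destruct (excluded_middle_informative P); tauto. Qed.

Lemma Tr_emb xi s (HG : Good xi s) j f a : j < s -> Tr xi j f (emb xi j a) = f a.
Proof.
  intros Hj. unfold Tr. destruct (excluded_middle_informative _) as [H|n].
  - destruct (constructive_indefinite_description _ H) as [a' Ha']. simpl.
    f_equal. apply (emb_props xi s HG j Hj); auto.
  - exfalso; apply n; eauto.
Qed.

Lemma Tr_out xi j f y : (forall a, emb xi j a <> y) -> Tr xi j f y = 0.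
Proof.
  intros H. unfold Tr. destruct (excluded_middle_informative _) as [[a Ha]|n]; auto.
  exfalso; eapply H; eauto.
Qed.

Lemma Mv_tt xi s (HG : Good xi s) m j : j < s -> Mv xi s m (tt xi j) = m j.
Proof.
  intros Hj. unfold Mv. rewrite (sum_below_single s j); auto.
  - rewrite ind_T; auto; lia.
  - intros l Hl Hn. rewrite ind_F; [lia|]. intros E. apply Hn. symmetry.
    apply (tt_inj xi s HG); auto.
Qed.

Lemma Mv_out xi s m y : (forall l, l < s -> y <> tt xi l) -> Mv xi s m y = 0.
Proof.
  intros H. unfold Mv. apply sum_below_zero. intros l Hl. rewrite ind_F; auto; lia.
Qed.

Lemma tt_ge xi s (HG : Good xi s) l j : l <= j -> j < s -> tt xi l = tt xi j \/ optlt (xi 0) (tt xi j) (tt xi l).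
Proof.
  intros H1 H2. destruct (Nat.eq_dec l j); [left; subst; auto| right; apply (tt_dec xi s HG); lia].
Qed.

Lemma psi0_above xi s (HG : Good xi s) m j k f y : j < s -> optlt (xi 0) (tt xi j) y ->
  psi0 xi m j k f y = Mv xi s m y.
Proof.
  intros Hj Hy. pose proof (good_E xi s HG) as [_ [ET _]].
  assert (Hne : forall l, j <= l -> l < s -> y <> tt xi l).
  { intros l H1 H2 E. subst y. destruct (tt_ge xi s HG j l H1 H2) as [E|E].
    - rewrite E in Hy. apply (E_irrefl xi s HG _ Hy).
    - apply (E_irrefl xi s HG (tt xi l)). eapply ET; eauto. }
  unfold psi0, Mv. rewrite (sum_below_split s j); [|lia|].
  - rewrite (ind_F (y = tt xi j)); [|apply Hne; lia]. rewrite Tr_out; [lia|].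
    intros a E. subst y. apply (E_irrefl xi s HG (tt xi j)). eapply ET; [exact Hy|].
    apply (emb_props xi s HG j Hj).
  - intros l H1 H2. rewrite ind_F; [lia|]. apply Hne; auto.
Qed.

Lemma psi0_at xi s (HG : Good xi s) m j k f : j < s -> psi0 xi m j k f (tt xi j) = k.
Proof.
  intros Hj. unfold psi0. rewrite sum_below_zero.
  - rewrite ind_T; auto. rewrite Tr_out; [lia|]. intros a E.
    apply (E_irrefl xi s HG (tt xi j)). rewrite <- E at 1. apply (emb_props xi s HG j Hj).
  - intros l Hl. rewrite ind_F; [lia|]. intros E. apply (tt_inj xi s HG) in E; lia.
Qed.

Lemma psi0_emb xi s (HG : Good xi s) m j k f a : j < s -> psi0 xi m j k f (emb xi j a) = f a.
Proof.
  intros Hj. pose proof (good_E xi s HG) as [_ [ET _]].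
  pose proof (proj1 (proj2 (proj2 (emb_props xi s HG j Hj))) a) as Ha.
  assert (Hne : forall l, l <= j -> emb xi j a <> tt xi l).
  { intros l Hl E. destruct (tt_ge xi s HG l j Hl Hj) as [E'|E'].
    - rewrite E, E' in Ha. apply (E_irrefl xi s HG _ Ha).
    - rewrite E in Ha. apply (E_irrefl xi s HG (tt xi l)). eapply ET; eauto. }
  unfold psi0. rewrite sum_below_zero.
  - rewrite ind_F; [|apply Hne; lia]. rewrite (Tr_emb xi s HG); auto. lia.
  - intros l Hl. rewrite ind_F; [lia|]. apply Hne; lia.
Qed.

Definition psi xi s m (z : rcar (cnf s xi m)) : option (rcar (xi 0)) -> nat :=
  psi0 xi m (projT1 (proj1_sig z)) (proj1_sig (fst (projT2 (proj1_sig z))))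
    (proj1_sig (snd (projT2 (proj1_sig z)))).

Lemma psi_mono xi s (HG : Good xi s) m z z' : rlt (cnf s xi m) z z' ->
  lexlt (EO xi) (psi xi s m z) (psi xi s m z').
Proof.
  pose proof (good_E xi s HG) as [_ [ET ETo]].
  destruct z as [[j [[k Hk] [f Hf]]] Hj], z' as [[j' [[k' Hk'] [f' Hf']]] Hj'].
  unfold psi; simpl. intros [H|[e H]]; simpl in *.
  - assert (Htt : optlt (xi 0) (tt xi j') (tt xi j)) by (apply (tt_dec xi s HG); auto).
    exists (tt xi j). split.
    + rewrite (psi0_at xi s HG), (psi0_above xi s HG m j' k' f' (tt xi j)); auto.
      rewrite (Mv_tt xi s HG); auto.
    + intros y Hy. rewrite (psi0_above xi s HG m j), (psi0_above xi s HG m j'); eauto.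
  - destruct e. simpl in H. destruct H as [H|[Ekk H]]; simpl in H.
    + exists (tt xi j). split.
      * rewrite !(psi0_at xi s HG); auto.
      * intros y Hy. rewrite !(psi0_above xi s HG m j); auto.
    + destruct H as [x [Hx1 Hx2]]. subst k'. exists (emb xi j x). split.
      * rewrite !(psi0_emb xi s HG); auto.
      * intros y Hy. destruct (ETo y (tt xi j)) as [E|[E|E]].
        -- destruct (proj2 (proj2 (proj2 (emb_props xi s HG j Hj))) y E) as [b <-].
           rewrite !(psi0_emb xi s HG); auto. apply Hx2.
           apply (emb_props xi s HG j Hj). exact Hy.
        -- subst y. rewrite !(psi0_at xi s HG); auto.
        -- rewrite !(psi0_above xi s HG m j); auto.
Qed.

Lemma psi_lt_M xi s (HG : Good xi s) m z : lexlt (EO xi) (psi xi s m z) (Mv xi s m).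
Proof.
  destruct z as [[j [[k Hk] [f Hf]]] Hj]. unfold psi; simpl in *.
  exists (tt xi j). split.
  - rewrite (psi0_at xi s HG), (Mv_tt xi s HG); auto.
  - intros y Hy. rewrite (psi0_above xi s HG m j); auto.
Qed.

Lemma emb_list xi s (HG : Good xi s) j : j < s -> forall lg,
  exists l, forall a, In (emb xi j a) lg -> In a l.
Proof.
  intros Hj. induction lg as [|y lg IH].
  - exists nil. intros a [].
  - destruct IH as [l Hl]. destruct (classic (exists a, emb xi j a = y)) as [[a0 Ha0]|Hn].
    + exists (a0 :: l). intros a [E|E]; [left | right; auto].
      apply (emb_props xi s HG j Hj). congruence.
    + exists l. intros a [E|E]; auto. exfalso; eauto.
Qed.

Lemma in_tt xi s l : l < s -> In (tt xi l) (map (tt xi) (seq 0 s)).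
Proof. intros H. apply in_map, in_seq. lia. Qed.

Lemma fin_Mv xi s m : finsupp (Mv xi s m).
Proof.
  exists (map (tt xi) (seq 0 s)). intros y Hy. apply NNPP. intros Hn. apply Hy.
  apply Mv_out. intros l Hl E. apply Hn. subst. apply in_tt; auto.
Qed.

Lemma psi_fin xi s (HG : Good xi s) m z : finsupp (psi xi s m z).
Proof.
  pose proof (good_E xi s HG) as [_ [ET ETo]].
  destruct z as [[j [[k Hk] [f [lf Hf]]]] Hj]. unfold psi; simpl in *.
  exists (map (tt xi) (seq 0 s) ++ map (emb xi j) lf). intros y Hy. apply in_or_app.
  destruct (ETo y (tt xi j)) as [E|[E|E]].
  - destruct (proj2 (proj2 (proj2 (emb_props xi s HG j Hj))) y E) as [b <-].
    right. apply in_map. apply Hf. rewrite (psi0_emb xi s HG) in Hy; auto.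
  - left. subst. apply in_tt; auto.
  - left. rewrite (psi0_above xi s HG m j) in Hy; auto. apply NNPP. intros Hn. apply Hy.
    apply Mv_out. intros l Hl E'. apply Hn. subst. apply in_tt; auto.
Qed.

Lemma psi_onto xi s (HG : Good xi s) m g : finsupp g -> lexlt (EO xi) g (Mv xi s m) ->
  exists z, feq (psi xi s m z) g.
Proof.
  pose proof (good_E xi s HG) as [_ [ET ETo]].
  intros [lg Hlg] [x [H1 H2]].
  assert (exists j, j < s /\ x = tt xi j) as [j [Hj ->]].
  { apply NNPP; intros Hn. rewrite Mv_out in H1; [lia|]. intros l Hl E; apply Hn; eauto. }
  rewrite (Mv_tt xi s HG) in H1; auto.
  assert (Hf : exists l, forall a, g (emb xi j a) <> 0 -> In a l).
  { destruct (emb_list xi s HG j Hj lg) as [l Hl]. exists l. intros a Ha. apply Hl, Hlg, Ha. }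
  exists (exist _ (existT _ j (exist _ (g (tt xi j)) H1,
                               exist _ (fun a => g (emb xi j a)) Hf)) Hj : rcar (cnf s xi m)).
  intros y. unfold psi; simpl.
  destruct (ETo y (tt xi j)) as [E|[E|E]].
  - destruct (proj2 (proj2 (proj2 (emb_props xi s HG j Hj))) y E) as [b <-].
    rewrite (psi0_emb xi s HG); auto.
  - subst; rewrite (psi0_at xi s HG); auto.
  - rewrite (psi0_above xi s HG); auto. symmetry; apply H2; auto.
Qed.

Definition isof (A B : RawOrd) (H : OrdIso A B) : rcar A -> rcar B :=
  proj1_sig (constructive_indefinite_description _ H).

Definition phi xi s (A : RawOrd) (m : nat -> nat) (u : option (rcar A)) : option (rcar (xi 0)) -> nat :=
  match u with None => Mv xi s m
  | Some a => match excluded_middle_informative (OrdIso A (cnf s xi m)) with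
              | left H => psi xi s m (isof _ _ H a) | right _ => fun _ => 0 end end.

Lemma phi_spec xi s A m : OrdIso A (cnf s xi m) -> exists f : rcar A -> rcar (cnf s xi m),
  ((forall a a', f a = f a' -> a = a') /\ (forall b, exists a, f a = b) /\
   (forall a a', rlt A a a' <-> rlt (cnf s xi m) (f a) (f a'))) /\
  forall a, phi xi s A m (Some a) = psi xi s m (f a).
Proof.
  intros H. unfold phi. destruct (excluded_middle_informative _) as [H'|n]; [|contradiction].
  exists (isof _ _ H'). split; [exact (proj2_sig (constructive_indefinite_description _ H'))|].
  reflexivity.
Qed.

Lemma phi_mono xi s (HG : Good xi s) A m : OrdIso A (cnf s xi m) ->
  forall u v, optlt A u v -> lexlt (EO xi) (phi xi s A m u) (phi xi s A m v).
Proof.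
  intros H. destruct (phi_spec xi s A m H) as [f [[F1 [F2 F3]] Ef]].
  intros [a|] [b|] Huv; simpl in Huv; try contradiction.
  - rewrite !Ef. apply psi_mono; auto. apply F3; auto.
  - rewrite Ef. apply psi_lt_M; auto.
Qed.

Lemma phi_fin xi s (HG : Good xi s) A m u : finsupp (phi xi s A m u).
Proof.
  destruct u as [a|]; simpl; [|apply fin_Mv].
  destruct (excluded_middle_informative _); [apply psi_fin; auto|].
  exists nil. intros x Hx. exfalso; apply Hx; reflexivity.
Qed.

Lemma phi_onto xi s (HG : Good xi s) A m : OrdIso A (cnf s xi m) ->
  forall g, finsupp g -> lexle (EO xi) g (phi xi s A m None) -> exists u, feq (phi xi s A m u) g.
Proof.
  intros H. destruct (phi_spec xi s A m H) as [f [[F1 [F2 F3]] Ef]].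
  intros g Hg [Hl|He].
  - destruct (psi_onto xi s HG m g Hg Hl) as [z Hz]. destruct (F2 z) as [a <-].
    exists (Some a). rewrite Ef. exact Hz.
  - exists None. intro y. symmetry. apply He.
Qed.

Lemma phi_le xi s (HG : Good xi s) A m : OrdIso A (cnf s xi m) -> IsWO A ->
  forall u v, lexle (EO xi) (phi xi s A m u) (phi xi s A m v) -> u = v \/ optlt A u v.
Proof.
  intros H W u v Hle. destruct (optO_WO A W) as [_ [_ To]].
  destruct (To u v) as [E|[E|E]]; auto. exfalso.
  apply (lexlt_asym (EO xi) _ _ (good_E xi s HG) (phi_mono xi s HG A m H v u E) Hle).
Qed.

Lemma phi_lt xi s (HG : Good xi s) A m : OrdIso A (cnf s xi m) -> IsWO A ->
  forall u v, lexlt (EO xi) (phi xi s A m u) (phi xi s A m v) -> optlt A u v.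
Proof.
  intros H W u v Hlt. destruct (phi_le xi s HG A m H W u v (or_introl Hlt)) as [E|E]; auto.
  subst. exfalso. apply (lexlt_irrefl _ _ Hlt).
Qed.

Lemma phi_le_top xi s (HG : Good xi s) A m : OrdIso A (cnf s xi m) ->
  forall u, lexle (EO xi) (phi xi s A m u) (phi xi s A m None).
Proof.
  intros H [a|]; [left; apply phi_mono; simpl; auto| right; intro; reflexivity].
Qed.

Lemma cnf_WO_sum xi s r (m : nat -> nat -> nat) (nu : nat -> RawOrd) :
  (forall i, (i < r)%nat -> IsWO (nu i)) -> (forall i, (i < r)%nat -> OrdIso (nu i) (cnf s xi (m i))) ->
  IsWO (cnf s xi (fun j => sum_below r (fun i => m i j))).
Proof.
  intros Hnu Hiso. unfold cnf. apply sum_WO. intros j Hj. cbv beta.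
  destruct (Nat.eq_dec (sum_below r (fun i => m i j)) 0) as [E|E].
  - rewrite E. apply mul0_WO.
  - apply mul_WO. destruct (sum_below_pos r (fun i => m i j)) as [i [Hi Hm]]; [lia|].
    assert (Wc : IsWO (cnf s xi (m i))) by (eapply iso_WO_fwd; eauto).
    apply (embed_WO _ _ (fun f => exist _ (existT _ j (exist _ 0%nat Hm, f)) Hj
                                  : rcar (cnf s xi (m i)))); auto.
    + intros f f' Ef. injection Ef. intros E'.
      apply inj_pair2_eq_dec in E'; [|exact Nat.eq_dec]. congruence.
    + intros f f'. simpl. split.
      * intros H. right. exists eq_refl. simpl. right. split; auto.
      * intros [H|[e H]]; [lia|]. rewrite (UIP_refl_nat _ e) in H. simpl in H.
        destruct H as [H|[_ H]]; [lia|exact H].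
Qed.

Definition canDS {X} (d : X -> X -> R) C (W : RawOrd) : rcar W -> X -> Prop :=
  match excluded_middle_informative (exists S, IsDerivSeq d C W S) with
  | left H => proj1_sig (constructive_indefinite_description _ H) | right _ => fun _ _ => False end.

Lemma canDS_spec {X} (d : X -> X -> R) C W : well_founded (rlt W) -> IsDerivSeq d C W (canDS d C W).
Proof.
  intros Wf. unfold canDS. destruct (excluded_middle_informative _) as [H|n].
  - exact (proj2_sig (constructive_indefinite_description _ H)).
  - exfalso. apply n. apply ds_exists; auto.
Qed.

Lemma rank_pred {X} d C W (T : rcar W -> X -> Prop) u y : IsDerivSeq d C W T -> ~ T u y ->
  (forall u', rlt W u' u -> T u' y) ->
  exists p, IsMaxIn (rlt W) (fun v => rlt W v u) p /\
    exists U c, IsOpen d U /\ U y /\ C c /\ forall z, T p z -> U z -> c z.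
Proof.
  intros HT Hn Hb. rewrite (HT u y) in Hn. unfold deriv_clause in Hn.
  destruct (classic (exists p, IsMaxIn (rlt W) (fun v => rlt W v u) p /\ ~ deriv_step d C (T p) y))
    as [[p [Hp Hs]]|Hno].
  - exists p. split; auto. unfold deriv_step in Hs. apply NNPP. intros Hne. apply Hs.
    split; [apply Hb, (proj1 Hp)|]. intros [U [HU [Uy [c [Hc Hi]]]]]. apply Hne.
    exists U, c. auto.
  - exfalso. apply Hn. split.
    + intros p Hp. apply NNPP. intros Hs. apply Hno. eauto.
    + intros _ v Hv. apply Hb, Hv.
Qed.

Lemma step_excl {X} d C W (T : rcar W -> X -> Prop) u p z U c : IsDerivSeq d C W T ->
  IsMaxIn (rlt W) (fun v => rlt W v u) p -> IsOpen d U -> U z -> C c ->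
  (forall z, T p z -> U z -> c z) -> ~ T u z.
Proof.
  intros HT Hp HU Uz Hc Hi Tz. apply HT in Tz. destruct Tz as [H1 _].
  destruct (H1 p Hp) as [_ Hs]. apply Hs. exists U. split; auto. split; auto. exists c. split; auto.
Qed.

Lemma rank_exists {X} (W : RawOrd) (T : rcar W -> X -> Prop) z u : IsWO W -> ~ T u z ->
  exists u', (~ T u' z /\ forall w, rlt W w u' -> T w z) /\ (u' = u \/ rlt W u' u).
Proof.
  intros [Wf [Tr To]] Hn. destruct (least_elt W (fun w => ~ T w z) Wf u Hn) as [m [Hm Hmin]].
  exists m. split.
  - split; auto. intros w Hw. apply NNPP. apply Hmin; auto.
  - destruct (To m u) as [E|[E|E]]; auto. exfalso. apply (Hmin u E Hn).
Qed.

Lemma fin_ext {T} (g h : T -> nat) : feq g h -> finsupp g -> finsupp h.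
Proof. intros E [l Hl]. exists l. intros x Hx. apply Hl. rewrite E. auto. Qed.

Lemma Mv_add xi s r (m : nat -> nat -> nat) :
  feq (Mv xi s (fun j => sum_below r (fun i => m i j))) (sumF r (fun i => Mv xi s (m i))).
Proof.
  intro y. unfold Mv, sumF.
  rewrite <- (sum_below_exch s r (fun i l => m i l * indc (y = tt xi l))).
  apply sum_below_ext. intros l _. rewrite sum_below_mulr. reflexivity.
Qed.

Theorem mainTheorem17 (X : Type) (d : X -> X -> R)
  (Hd : IsMetric d) (Hc : IsCompact d)
  (r : nat) (Hr : (0 < r)%nat) (C : nat -> (X -> Prop) -> Prop)
  (nu : nat -> RawOrd) (Hnu : forall i, (i < r)%nat -> IsWO (nu i))
  (gamma : RawOrd) (Hgamma : NatSum r nu gamma) :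
  forall x, Deriv d (meet_family r C) gamma x ->
    exists i, (i < r)%nat /\ Deriv d (C i) (nu i) x.
Proof.
  intros x Hx. destruct Hgamma as [s [xi [m [Hxi [Hdec [Hiso Hg]]]]]].
  apply NNPP. intros Hnot.
  assert (HnD : forall i, (i < r)%nat -> ~ Deriv d (C i) (nu i) x)
    by (intros i Hi HD; apply Hnot; eauto).
  destruct (Nat.eq_dec s 0) as [Hs0|Hs0].
  { apply (HnD 0%nat Hr). intros S HS. split.
    - intros p _. exfalso. destruct (Hiso 0%nat Hr) as [f _]. destruct (f p) as [[j a] Hj].
      simpl in Hj. lia.
    - intros _ v _. exfalso. destruct (Hiso 0%nat Hr) as [f _]. destruct (f v) as [[j a] Hj].
      simpl in Hj. lia. }
  assert (HG : Good xi s) by (split; [lia| split; auto]).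
  pose proof (good_E xi s HG) as WE.
  set (M := fun j => sum_below r (fun i => m i j)).
  assert (Wg : IsWO gamma)
    by (eapply iso_WO_back; [exact Hg| apply (cnf_WO_sum xi s r m nu); auto]).
  pose proof (optO_WO gamma Wg) as Wog.
  set (Tg := canDS d (meet_family r C) (optO gamma)).
  assert (HTg : IsDerivSeq d (meet_family r C) (optO gamma) Tg) by (apply canDS_spec; apply Wog).
  set (T := fun i => canDS d (C i) (optO (nu i))).
  assert (HT : forall i, (i < r)%nat -> IsDerivSeq d (C i) (optO (nu i)) (T i))
    by (intros i Hi; apply canDS_spec, optO_WO, Hnu, Hi).
  set (ph := fun i => phi xi s (nu i) (m i)).
  set (phg := phi xi s gamma M).
  assert (Claim : forall w y (F : nat -> option (rcar (xi 0%nat)) -> nat),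
     (forall i, (i < r)%nat -> exists u, (~ T i u y /\ forall u', optlt (nu i) u' u -> T i u' y)
                                  /\ feq (F i) (ph i u)) ->
     feq (phg w) (sumF r F) -> forall v, v = w \/ optlt gamma w v -> ~ Tg v y).
  { intros w. induction w as [w IH] using (well_founded_induction (proj1 Wog)).
    intros y F HF Hw v Hv.
    assert (Hsp : forall i, (i < r)%nat ->
      exists t : (option (rcar (xi 0%nat)) -> nat) * (X -> Prop) * (X -> Prop),
      exists u p, (~ T i u y /\ forall u', optlt (nu i) u' u -> T i u' y) /\ feq (F i) (ph i u) /\
        IsMaxIn (optlt (nu i)) (fun v => optlt (nu i) v u) p /\
        feq (fst (fst t)) (ph i p) /\ IsOpen d (snd (fst t)) /\ snd (fst t) y /\ C i (snd t) /\
        forall z, T i p z -> snd (fst t) z -> snd t z).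
    { intros i Hi. destruct (HF i Hi) as [u [Hu Hfu]].
      destruct (rank_pred d (C i) (optO (nu i)) (T i) u y (HT i Hi) (proj1 Hu) (proj2 Hu))
        as [p [Hp [U [c [HU [Uy [Hc' Hi']]]]]]].
      exists (ph i p, U, c), u, p. simpl.
      exact (conj Hu (conj Hfu (conj Hp (conj (fun _ => eq_refl) (conj HU (conj Uy (conj Hc' Hi'))))))). }
    destruct (fin_choice r _ (fun _ => 0%nat, fun _ => True, fun _ => True) Hsp) as [tf Htf].
    set (Fp := fun i => fst (fst (tf i))). set (Us := fun i => snd (fst (tf i))).
    set (cs := fun i => snd (tf i)).
    assert (HFpF : forall j, (j < r)%nat -> lexlt (EO xi) (Fp j) (F j)).
    { intros j Hj. destruct (Htf j Hj) as [u [p [_ [Hfu [Hp [Hfp _]]]]]].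
      apply (lexlt_ext (EO xi) (ph j p) (Fp j) (ph j u) (F j));
        [intro; symmetry; apply Hfp| intro; symmetry; apply Hfu|].
      apply (phi_mono xi s HG (nu j) (m j) (Hiso j Hj)). exact (proj1 Hp). }
    assert (HfinF : forall i, (i < r)%nat -> finsupp (F i)).
    { intros i Hi. destruct (HF i Hi) as [u [_ Hu]].
      apply (fin_ext _ _ (fun y => eq_sym (Hu y))). apply phi_fin; auto. }
    assert (HfinFp : forall i, (i < r)%nat -> finsupp (Fp i)).
    { intros i Hi. destruct (Htf i Hi) as [u [p [_ [_ [_ [Hfp _]]]]]].
      apply (fin_ext _ _ (fun y => eq_sym (Hfp y))). apply phi_fin; auto. }
    set (B := fun j => sumF r (fun i => if Nat.eq_dec i j then Fp i else F i)).
    assert (HB : forall j, (j < r)%nat -> lexlt (EO xi) (B j) (phg w)).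
    { intros j Hj. apply (lexlt_ext (EO xi) (B j) (B j) (sumF r F) (phg w));
        [intro; reflexivity| intro; symmetry; apply Hw|].
      apply (sumF_lt (EO xi) r _ _ j WE).
      - intros i Hi. destruct (Nat.eq_dec i j).
        + subst. left. apply HFpF; auto.
        + right; intro; reflexivity.
      - exact Hj.
      - destruct (Nat.eq_dec j j); [|congruence]. apply HFpF; auto. }
    assert (HfinB : forall j, (j < r)%nat -> finsupp (B j)).
    { intros j Hj. apply fin_sumF. intros i Hi. destruct (Nat.eq_dec i j); auto. }
    assert (Hbeta : forall j, (j < r)%nat ->
              exists b : option (rcar gamma), feq (phg b) (B j) /\ optlt gamma b w).
    { intros j Hj. destruct (phi_onto xi s HG gamma M Hg (B j)) as [b Hb]; auto.
      - left. apply (lexlt_le_trans (EO xi) _ (phg w)); auto. apply phi_le_top; auto.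
      - exists b. split; auto. apply (phi_lt xi s HG gamma M Hg Wg).
        apply (lexlt_ext (EO xi) (B j) (phg b) (phg w) (phg w));
          [intro; symmetry; apply Hb | intro; reflexivity | apply HB; auto]. }
    destruct (fin_choice r _ None Hbeta) as [bf Hbf].
    destruct (fin_max (optO gamma) bf r Wog Hr) as [jm [Hjm Hmax]].
    set (beta := bf jm).
    set (U := fun z => forall i, (i < r)%nat -> Us i z).
    set (c := fun z => forall i, (i < r)%nat -> cs i z).
    assert (Key : forall z, Tg beta z -> U z -> c z).
    { intros z Hz Uz.
      assert (HZ : forall i, (i < r)%nat -> exists G,
        (exists u', (~ T i u' z /\ forall u'', optlt (nu i) u'' u' -> T i u'' z) /\ feq G (ph i u')) /\
        ((feq G (F i) /\ cs i z) \/ lexle (EO xi) G (Fp i))).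
      { intros i Hi. destruct (Htf i Hi) as [u [p [Hu [Hfu [Hp [Hfp [HU [Uy [Hc' Hic]]]]]]]]].
        assert (Hn : ~ T i u z).
        { apply (step_excl d (C i) (optO (nu i)) (T i) u p z (Us i) (cs i)); auto. }
        destruct (rank_exists (optO (nu i)) (T i) z u (optO_WO _ (Hnu i Hi)) Hn) as [u' [Hu' [E|E]]].
        - subst u'. exists (ph i u). split; [exists u; split; auto; intro; reflexivity|].
          left. split; [intro; symmetry; apply Hfu|].
          apply Hic; [apply (proj2 Hu'), (proj1 Hp) | apply Uz; auto].
        - exists (ph i u'). split; [exists u'; split; auto; intro; reflexivity|]. right.
          apply (lexle_ext (EO xi) (ph i u') (ph i u') (ph i p) (Fp i));
            [intro; reflexivity| intro; symmetry; apply Hfp|].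
          destruct (proj2 Hp u' E) as [E'|E'];
            [subst; right; intro; reflexivity| left; apply phi_mono; auto]. }
      destruct (fin_choice r _ (fun _ => 0%nat) HZ) as [F' HF'].
      intros i0 Hi0.
      destruct (classic (forall i, (i < r)%nat -> feq (F' i) (F i) /\ cs i z)) as [Hall|Hex].
      - apply (Hall i0 Hi0).
      - exfalso.
        assert (exists j, (j < r)%nat /\ lexle (EO xi) (F' j) (Fp j)) as [j [Hj Hj']].
        { apply NNPP. intros Hno. apply Hex. intros i Hi.
          destruct (HF' i Hi) as [_ [H|H]]; auto. exfalso; apply Hno; eauto. }
        assert (HbB : lexle (EO xi) (B j) (phg beta)).
        { destruct (Hbf j Hj) as [Hbj _].
          apply (lexle_ext (EO xi) (phg (bf j)) (B j) (phg beta) (phg beta));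
            [exact Hbj| intro; reflexivity|].
          destruct (Hmax j Hj) as [E|E]; [unfold beta; rewrite E; right; intro; reflexivity|].
          left. apply phi_mono; auto. }
        assert (Hle : lexle (EO xi) (sumF r F') (phg beta)).
        { apply (lexle_trans (EO xi) _ (B j)); auto.
          apply sumF_le; auto. intros i Hi. destruct (Nat.eq_dec i j).
          + subst; auto.
          + destruct (HF' i Hi) as [_ [[H _]|H]]; [right; exact H |].
            left; apply (lexle_lt_trans (EO xi) _ (Fp i)); auto. }
        assert (HfinF' : finsupp (sumF r F')).
        { apply fin_sumF. intros i Hi. destruct (HF' i Hi) as [[u [_ Hu]] _].
          apply (fin_ext _ _ (fun y => eq_sym (Hu y))). apply phi_fin; auto. }
        destruct (phi_onto xi s HG gamma M Hg (sumF r F')) as [w' Hw']; auto.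
        { apply (lexle_trans (EO xi) _ (phg beta)); auto. apply phi_le_top; auto. }
        assert (Hw'b : w' = beta \/ optlt gamma w' beta).
        { apply (phi_le xi s HG gamma M Hg Wg).
          apply (lexle_ext (EO xi) (sumF r F') (phg w') (phg beta) (phg beta));
            [intro; symmetry; apply Hw' | intro; reflexivity| exact Hle]. }
        assert (Hbw : optlt gamma beta w) by (apply (Hbf jm Hjm)).
        assert (Hw'w : optlt gamma w' w).
        { destruct Hw'b as [E|E]; [subst; auto| eapply (proj1 (proj2 Wog)); eauto]. }
        apply (IH w' Hw'w z F' (fun i Hi => proj1 (HF' i Hi)) Hw' beta (match Hw'b with or_introl E => or_introl (eq_sym E) | or_intror E => or_intror E end)). exact Hz. }
    assert (Hbw : optlt gamma beta w) by (apply (Hbf jm Hjm)).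
    apply (excl d (meet_family r C) (optO gamma) Tg Wog HTg beta U c y).
    - apply open_inter. intros i Hi. destruct (Htf i Hi) as [u [p [_ [_ [_ [_ [HU _]]]]]]]. exact HU.
    - exists cs. split; [|intros z; unfold c; tauto].
      intros i Hi. destruct (Htf i Hi) as [u [p [_ [_ [_ [_ [_ [_ [Hc' _]]]]]]]]]. exact Hc'.
    - exact Key.
    - intros i Hi. destruct (Htf i Hi) as [u [p [_ [_ [_ [_ [_ [Uy _]]]]]]]]. exact Uy.
    - destruct Hv as [E|E]; [subst; auto| eapply (proj1 (proj2 Wog)); eauto]. }
  assert (HF : forall i, (i < r)%nat -> exists G, exists u,
             (~ T i u x /\ forall u', optlt (nu i) u' u -> T i u' x) /\ feq G (ph i u)).
  { intros i Hi. assert (Hn : ~ T i None x).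
    { intros HTx. apply (HnD i Hi). apply (deriv_opt d (C i) (nu i) (T i)); auto.
      apply (Hnu i Hi). }
    destruct (rank_exists (optO (nu i)) (T i) x None (optO_WO _ (Hnu i Hi)) Hn) as [u [Hu _]].
    exists (ph i u), u. split; [exact Hu| intro; reflexivity]. }
  destruct (fin_choice r _ (fun _ => 0%nat) HF) as [F HFc].
  assert (Hsum : lexle (EO xi) (sumF r F) (phg None)).
  { apply (lexle_ext (EO xi) (sumF r F) (sumF r F) (sumF r (fun i => Mv xi s (m i))) (phg None));
      [intro; reflexivity | intro; symmetry; apply Mv_add |].
    apply sumF_le; auto. intros i Hi. destruct (HFc i Hi) as [u [_ Hu]].
    apply (lexle_ext (EO xi) (ph i u) (F i) (ph i None) (Mv xi s (m i)));
      [intro; symmetry; apply Hu| intro; reflexivity|].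
    apply (phi_le_top xi s HG (nu i) (m i) (Hiso i Hi)). }
  destruct (phi_onto xi s HG gamma M Hg (sumF r F)) as [w Hw]; auto.
  { apply fin_sumF. intros i Hi. destruct (HFc i Hi) as [u [_ Hu]].
    apply (fin_ext _ _ (fun y => eq_sym (Hu y))). apply phi_fin; auto. }
  apply (Claim w x F HFc Hw None).
  - destruct w; [right; simpl; auto| left; auto].
  - apply (deriv_opt d (meet_family r C) gamma Tg); auto. apply Wg.
Qed.
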